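(* Let $\mu$ be a singular strong limit cardinal, let $\mathbf K$ be either the class of locally finite groups or a universal class whose vocabulary has cardinality $<\mu$, and let $N\in\mathbf K$ have cardinality $\mu$. Then the set $$\mathrm{IDC}_{<\mu}(N)=\{M : M\subseteq N,\ M\in\mathbf K,\ |M|<\mu,\ M \text{ is } {\rm cf}(\mu)\text{-indecomposable}\}$$ has cardinality at most $\mu$.
   Context: A universal class $\mathbf K$ is a class of $\tau$-structures closed under isomorphism such that a $\tau$-structure belongs to $\mathbf K$ iff each of its finitely generated substructures does; $M\subseteq N$ means $M$ is a substructure of $N$. The class of locally finite groups (groups all of whose finitely generated subgroups are finite) is such a class in the group vocabulary, with substructures being subgroups. For a regular cardinal $\theta$, $M\in\mathbf K$ is $\theta$-indecomposable if whenever $\langle M_i:i<\theta\rangle$ is a $\subseteq$-increasing sequence of members of $\mathbf K$ with union $M$, then $M=M_i$ for some $i<\theta$. *)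

(* Defs.v *)
From mathcomp Require Import all_boot.
From Stdlib Require Import List.

Set Implicit Arguments.
Unset Strict Implicit.
Unset Printing Implicit Defensive.

Definition le_card (A B : Type) : Prop := exists f : A -> B, injective f.
Definition lt_card (A B : Type) : Prop := le_card A B /\ ~ le_card B A.

Definition infinite_card (U : Type) : Prop := le_card nat U.

(* |U| is a strong limit: 2^lambda < |U| for every lambda < |U|
   (every cardinal below |U| is the size of some subset of U). *)
Definition strong_limit (U : Type) : Prop :=
  forall X : U -> Prop, lt_card {u | X u} U -> lt_card ({u | X u} -> Prop) U.

Definition covered_by (U J : Type) : Prop :=
  exists A : J -> U -> Prop,
    (forall j, lt_card {u | A j u} U) /\ (forall u, exists j, A j u).

Definition singular (U : Type) : Prop :=
  exists X : U -> Prop, lt_card {u | X u} U /\ covered_by U {u | X u}.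

(* (I, lt) is (order-isomorphic to) the initial ordinal cf(|U|):
   a well-order all of whose proper initial segments have smaller
   cardinality, whose cardinality is the least |J| with covered_by U J. *)
Definition is_cof_ordinal (U I : Type) (lt : I -> I -> Prop) : Prop :=
  (forall i j k, lt i j -> lt j k -> lt i k) /\
  (forall i j, lt i j \/ i = j \/ lt j i) /\
  well_founded lt /\
  (forall i, lt_card {j | lt j i} I) /\
  covered_by U I /\
  (forall J : I -> Prop, lt_card {i | J i} I -> ~ covered_by U {i | J i}).

Record vocab := Vocab {
  vfun : Type; vrel : Type;
  farity : vfun -> nat; rarity : vrel -> nat }.

Record str (tau : vocab) := Str {
  car :> Type;
  fint : forall f : vfun tau, ('I_(farity f) -> car) -> car;
  rint : forall r : vrel tau, ('I_(rarity r) -> car) -> Prop }.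

Arguments fint {tau} s f xs.
Arguments rint {tau} s r xs.

Definition isomorphic (tau : vocab) (A B : str tau) : Prop :=
  exists (h : A -> B) (g : B -> A),
    cancel h g /\ cancel g h /\
    (forall f xs, h (fint A f xs) = fint B f (fun i => h (xs i))) /\
    (forall r xs, rint A r xs <-> rint B r (fun i => h (xs i))).

Definition closed (tau : vocab) (A : str tau) (S : A -> Prop) : Prop :=
  forall f (xs : 'I_(farity f) -> A), (forall i, S (xs i)) -> S (fint A f xs).

Definition sub (tau : vocab) (A : str tau) (S : A -> Prop) (hS : closed S)
  : str tau :=
  @Str tau {a | S a}
    (fun f xs => exist _ (fint A f (fun i => sval (xs i)))
                      (hS f _ (fun i => proj2_sig (xs i))))
    (fun r xs => rint A r (fun i => sval (xs i))).

Definition gen (tau : vocab) (A : str tau) (X : A -> Prop) : A -> Prop :=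
  fun a => forall S : A -> Prop, closed S -> (forall x, X x -> S x) -> S a.

Lemma gen_closed (tau : vocab) (A : str tau) (X : A -> Prop) : closed (gen X).
Proof.
intros f xs H S hS hX. apply: (hS) => i; exact: (H i S hS hX).
Qed.

Definition fgsub (tau : vocab) (A : str tau) (l : list A) : str tau :=
  sub (@gen_closed tau A (fun a : A => List.In a l)).

Definition universal_class (tau : vocab) (K : str tau -> Prop) : Prop :=
  (forall A B, isomorphic A B -> K A -> K B) /\
  (forall A, K A <-> forall l : list A, K (fgsub l)).

Definition inK (tau : vocab) (K : str tau -> Prop) (N : str tau)
  (S : N -> Prop) : Prop := exists hS : closed S, K (sub hS).

Definition indecomposable (tau : vocab) (K : str tau -> Prop) (N : str tau)
  (I : Type) (lt : I -> I -> Prop) (M : N -> Prop) : Prop :=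
  forall Ms : I -> N -> Prop,
    (forall i, inK K (Ms i)) ->
    (forall i j, lt i j -> forall a, Ms i a -> Ms j a) ->
    (forall a, M a <-> exists i, Ms i a) ->
    exists i, forall a, M a <-> Ms i a.

(* IDC_{<mu}(N) with mu = |N| and theta given by (I, lt) *)
Definition IDC (tau : vocab) (K : str tau -> Prop) (N : str tau)
  (I : Type) (lt : I -> I -> Prop) (M : N -> Prop) : Prop :=
  [/\ inK K M, lt_card {a | M a} N & indecomposable K lt M].

Inductive gsym := gmul | ginv | gone.
Definition garity (s : gsym) : nat :=
  match s with gmul => 2 | ginv => 1 | gone => 0 end.
Definition grp_voc : vocab := @Vocab gsym Empty_set garity (fun e => match e with end).

Definition args2 (A : Type) (x y : A) : 'I_2 -> A :=
  fun i => if val i == 0 then x else y.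

Definition gop (A : str grp_voc) (x y : A) : A := fint A gmul (args2 x y).
Definition gin (A : str grp_voc) (x : A) : A := fint A ginv (fun _ : 'I_1 => x).
Definition ord0_elim (T : Type) (i : 'I_0) : T :=
  let: Ordinal m Hm := i in
  False_rect T (Bool.diff_false_true (etrans (esym (ltn0 m)) Hm)).
Definition gid (A : str grp_voc) : A := fint A gone (@ord0_elim A).

Definition is_group (A : str grp_voc) : Prop :=
  [/\ (forall x y z : A, gop (gop x y) z = gop x (gop y z)),
      (forall x : A, gop (gid A) x = x /\ gop x (gid A) = x) &
      (forall x : A, gop (gin x) x = gid A /\ gop x (gin x) = gid A)].

Definition locally_finite_group (A : str grp_voc) : Prop :=
  is_group A /\
  forall l : list A, exists l' : list A, forall a, gen (fun x => List.In x l) a -> List.In a l'.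

(* Main.v *)
Require Import Defs.
From mathcomp Require Import all_boot.
From mathcomp Require Import boolp classical_sets.
From Stdlib Require Import ProofIrrelevance ClassicalEpsilon FunctionalExtensionality PropExtensionality.

Lemma le_card_comp (A B C : Type) : le_card A B -> le_card B C -> le_card A C.
Proof.
move=> [f hf] [g hg]; exists (fun a => g (f a)) => x y /hg /hf; done.
Qed.

Lemma le_card_refl (A : Type) : le_card A A.
Proof. by exists id. Qed.

Lemma le_lt_card (A B N : Type) : le_card A B -> lt_card B N -> lt_card A N.
Proof.
move=> hAB [hBN nNB]; split; first exact: le_card_comp hAB hBN.
by move=> hNA; apply: nNB; apply: le_card_comp hNA hAB.
Qed.

Definition pinj (X Y : Type) (R : set (X * Y)) : Prop :=
  (forall x y y', R (x, y) -> R (x, y') -> y = y') /\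
  (forall x x' y, R (x, y) -> R (x', y) -> x = x').

Lemma card_compare (X Y : Type) : le_card X Y \/ le_card Y X.
Proof.
have [F FP Ftot|R [[Rf Ri] Rmax]] := @Zorn_bigcup (X * Y) (@pinj X Y).
  split.
    move=> x y y' [A FA Axy] [B FB Bxy'].
    have [AB|BA] := Ftot _ _ FA FB.
      by apply: (proj1 (FP _ FB)) x y y' (AB _ Axy) Bxy'.
    by apply: (proj1 (FP _ FA)) x y y' Axy (BA _ Bxy').
  move=> x x' y [A FA Axy] [B FB Bxy'].
  have [AB|BA] := Ftot _ _ FA FB.
    by apply: (proj2 (FP _ FB)) x x' y (AB _ Axy) Bxy'.
  by apply: (proj2 (FP _ FA)) x x' y Axy (BA _ Bxy').
have [hX|/existsNP [x0 hx0]] := pselect (forall x, exists y, R (x, y)).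
  left; pose f x := projT1 (cid (hX x)).
  exists f => a b fab.
  apply: (Ri a b (f a)); first exact: (projT2 (cid (hX a))).
  by rewrite fab; exact: (projT2 (cid (hX b))).
have [hY|/existsNP [y0 hy0]] := pselect (forall y, exists x, R (x, y)).
  right; pose g y := projT1 (cid (hY y)).
  exists g => a b gab.
  apply: (Rf (g a) a b); first exact: (projT2 (cid (hY a))).
  by rewrite gab; exact: (projT2 (cid (hY b))).
exfalso.
have hx0' : forall y, ~ R (x0, y) by move=> y Ry; apply: hx0; exists y.
have hy0' : forall x, ~ R (x, y0) by move=> x Rx; apply: hy0; exists x.
apply: (Rmax (fun p => R p \/ p = (x0, y0))).
  split; first by move=> p Rp; left.
  by move=> sub; apply: (hx0' y0); apply: sub; right.
split.
  move=> x y y' [Rxy|[ex ey]] [Rxy'|[ex' ey']].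
  - exact: Rf Rxy Rxy'.
  - by subst; case: (hx0' _ Rxy).
  - by subst; case: (hx0' _ Rxy').
  - by subst.
move=> x x' y [Rxy|[ex ey]] [Rxy'|[ex' ey']].
- exact: Ri Rxy Rxy'.
- by subst; case: (hy0' _ Rxy).
- by subst; case: (hy0' _ Rxy').
- by subst.
Qed.

Lemma sig_eq (T : Type) (P : T -> Prop) (u v : {x | P x}) : sval u = sval v -> u = v.
Proof.
case: u => x px; case: v => y py /= exy; subst y; congr exist; exact: proof_irrelevance.
Qed.

Lemma pow_small (N X : Type) : strong_limit N -> lt_card X N -> lt_card (X -> Prop) N.
Proof.
move=> SL hX; have [[f hf] _] := hX.
pose X' := fun n => exists x, f x = n.
pose finv (u : {n | X' n}) := projT1 (cid (svalP u)).
have finvK u : f (finv u) = sval u by rewrite /finv; case: (cid _).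
have finvi : injective finv.
  by move=> u v e; apply: sig_eq; rewrite -!finvK e.
have hX' : lt_card {n | X' n} N by apply: le_lt_card hX; exists finv.
have := SL X' hX'.
apply: le_lt_card.
exists (fun P u => P (finv u)) => P Q e; apply: functional_extensionality => x.
have ux : X' (f x) by exists x.
have := f_equal (fun F => F (exist _ (f x) ux)) e => /=.
suff -> : finv (exist _ (f x) ux) = x by [].
by apply: hf; rewrite finvK.
Qed.

Lemma sum_self_le (X : Type) : le_card (X + X) ((X -> Prop) -> Prop).
Proof.
exists (fun s => match s with inl x => fun P => P x | inr x => fun P => ~ P x end).
case=> x [] y e.
- have := f_equal (fun F => F (fun z => z = x)) e => /= e'.
  have h : y = x by rewrite -e'.
  by rewrite h.
- have := f_equal (fun F => F (fun _ => True)) e => /= e'.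
  have h : ~ True by rewrite -e'.
  by case: h.
- have := f_equal (fun F => F (fun _ => True)) e => /= e'.
  have h : ~ True by rewrite e'.
  by case: h.
- have := f_equal (fun F => F (fun z => ~ z = x)) e => /= e'.
  have : ~ ~ y = x by rewrite -e'.
  by move=> /NNPP ->.
Qed.

Lemma sum_small (N X Y : Type) : strong_limit N -> lt_card X N -> lt_card Y N ->
  lt_card (X + Y) N.
Proof.
move=> SL hX hY; have [[g hg]|[g hg]] := card_compare Y X.
- apply: (@le_lt_card _ (X + X)).
    exists (fun s => match s with inl x => inl x | inr y => inr (g y) end).
    by case=> a [] b //= [e]; first [rewrite (hg _ _ e) | rewrite e].
  apply: le_lt_card (sum_self_le X) _.
  by apply: pow_small => //; apply: pow_small.
- apply: (@le_lt_card _ (Y + Y)).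
    exists (fun s => match s with inl x => inl (g x) | inr y => inr y end).
    by case=> a [] b //= [e]; first [rewrite (hg _ _ e) | rewrite e].
  apply: le_lt_card (sum_self_le Y) _.
  by apply: pow_small => //; apply: pow_small.
Qed.

Lemma union_small (N I : Type)
  (hcof : forall J : I -> Prop, lt_card {i | J i} I -> ~ covered_by N {i | J i})
  (J : I -> Prop) (hJ : lt_card {i | J i} I) (B : I -> N -> Prop)
  (hB : forall i, J i -> lt_card {u | B i u} N) :
  lt_card {a | exists i, J i /\ B i a} N.
Proof.
split; first by exists sval => u v; apply: sig_eq.
move=> [g hg]; apply: (hcof J hJ).
exists (fun j n => B (sval j) (sval (g n))); split.
  move=> [i Ji] /=; apply: (@le_lt_card _ {u | B i u}); last exact: hB.
  exists (fun n : {n | B i (sval (g n))} => exist (B i) (sval (g (sval n))) (svalP n)) => u v e.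
  by apply: sig_eq; apply: hg; apply: sig_eq; have := f_equal sval e.
move=> n; have [i [Ji Bi]] := svalP (g n).
by exists (exist _ i Ji).
Qed.
Arguments pow_small {N X}.
Arguments sum_small {N X Y}.
Arguments union_small {N I}.

Lemma le_card_proj (A B C : Type) (p : B -> C) (v : A -> C) :
  injective v -> (forall a, exists b, p b = v a) -> le_card A B.
Proof.
move=> hv h; exists (fun a => projT1 (cid (h a))) => a b e.
apply: hv; rewrite -(projT2 (cid (h a))) -(projT2 (cid (h b))).
by rewrite e.
Qed.

Lemma cantor (X : Type) : ~ le_card (X -> Prop) X.
Proof.
move=> [f hf].
pose Q := fun x => exists P, f P = x /\ ~ P x.
have nQ : ~ Q (f Q).
  by move=> hq; have [P [/hf e nP]] := hq; apply: nP; rewrite e.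
apply: (nQ); exists Q; split => //.
Qed.

Lemma gen_mono (tau : vocab) (A : str tau) (X Y : A -> Prop) :
  (forall a, X a -> Y a) -> forall a, gen X a -> gen Y a.
Proof. by move=> XY a gX S hS hY; apply: gX => // x /XY /hY. Qed.

Lemma gen_sub (tau : vocab) (A : str tau) (X S : A -> Prop) :
  Defs.closed S -> (forall a, X a -> S a) -> forall a, gen X a -> S a.
Proof. by move=> hS hX a gX; apply: gX. Qed.

Lemma gen_base (tau : vocab) (A : str tau) (X : A -> Prop) a : X a -> gen X a.
Proof. by move=> Xa S _ hX; apply: hX. Qed.

Lemma main_gen (tau : vocab) (K : str tau -> Prop) (N : str tau) (I : Type)
  (lt : I -> I -> Prop) :
  infinite_card N -> strong_limit N -> is_cof_ordinal N lt ->
  (forall S : N -> Prop, Defs.closed S -> inK K S) ->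
  le_card {M : N -> Prop | IDC K lt M} N.
Proof.
move=> [nf _] SL [ltT [tri [wf [hseg [[A [hA cov]] hcof]]]]] hK.
pose n0 := nf 0.
pose U i := fun a : N => exists j, (lt j i \/ j = i) /\ A j a.
have hU : forall i, lt_card {a | U i a} N.
  move=> i.
  have hV := union_small hcof _ (hseg i) A (fun j _ => hA j).
  apply: (@le_lt_card _ ({a | exists j, lt j i /\ A j a} + {a | A i a})); last first.
    by apply: sum_small => //; apply: hA.
  apply: (@le_card_proj _ _ N (fun s => match s with inl x => sval x | inr x => sval x end) sval).
    by move=> u v; apply: sig_eq.
  move=> [a [j [[lji|eji] Aj]]].
    by exists (inl (exist _ a (ex_intro _ j (conj lji Aj)))).
  by subst j; exists (inr (exist _ a Aj)).
pose P i := {u | U i u} -> Prop.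
have hP : forall i, lt_card (P i) N by move=> i; apply: pow_small.
pose F := fun i (prev : forall j, lt j i -> P j -> N) =>
  epsilon (inhabits (fun _ : P i => n0))
    (fun g : P i -> N => injective g /\ forall x j (h : lt j i) y, g x <> prev j h y).
pose e := Fix wf (fun i => P i -> N) F.
have eE : forall i, e i = F i (fun j _ => e j).
  move=> i; rewrite /e Fix_eq //.
  move=> x f g fg; have -> // : f = g.
  apply: functional_extensionality_dep => y.
  apply: functional_extensionality_dep => p; exact: fg.
have he : forall i, injective (e i) /\ forall x j, lt j i -> forall y, e i x <> e j y.
  elim/(well_founded_ind wf) => i IH.
  suff [g [ginj gD]] : exists g : P i -> N, injective g /\
      forall x j (h : lt j i) y, g x <> e j y.
    have := epsilon_spec (inhabits (fun _ : P i => n0))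
      (fun g : P i -> N => injective g /\ forall x j (h : lt j i) y, g x <> e j y)
      (ex_intro _ g (conj ginj gD)).
    rewrite -/(F i (fun j _ => e j)) -eE => -[h1 h2]; split => //.
  pose D := fun n => exists j, lt j i /\ exists y, e j y = n.
  have hD : lt_card {n | D n} N.
    apply: (union_small hcof _ (hseg i)) => j lji.
    apply: (@le_lt_card _ (P j)); last exact: hP.
    apply: (@le_card_proj _ _ N (e j) sval); first by move=> u v; apply: sig_eq.
    by move=> [n [y eyn]]; exists y.
  have [[E hE] _] := pow_small SL (sum_small SL (hU i) hD).
  pose comb (x : P i) (T : {n | D n} -> Prop) :=
    fun s => match s with inl u => x u | inr d => T d end.
  have hT : forall x, exists T, ~ D (E (comb x T)).
    move=> x; apply: NNPP => nT.
    have hall : forall T, D (E (comb x T)) :=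
      fun T => NNPP _ (fun h => nT (ex_intro _ T h)).
    apply: (cantor {n | D n}).
    exists (fun T => exist D (E (comb x T)) (hall T)) => T1 T2 eT.
    have /hE ec := f_equal sval eT.
    apply: functional_extensionality => d.
    exact: (f_equal (fun c => c (inr d)) ec).
  exists (fun x => E (comb x (projT1 (cid (hT x))))); split.
    move=> x1 x2 /hE ec; apply: functional_extensionality => u.
    exact: (f_equal (fun c => c (inl u)) ec).
  move=> x j lji y exy.
  apply: (projT2 (cid (hT x))); rewrite exy.
  by exists j; split => //; exists y.
have eij : forall i1 i2 (x1 : P i1) (x2 : P i2), e i1 x1 = e i2 x2 -> i1 = i2.
  move=> i1 i2 x1 x2 ex.
  have [l12|[//|l21]] := tri i1 i2.
    by case: ((proj2 (he i2)) x2 i1 l12 x1).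
  by case: ((proj2 (he i1)) x1 i2 l21 x2).
have hM : forall M : {M : N -> Prop | IDC K lt M}, exists i,
    forall a, sval M a <-> gen (fun b => sval M b /\ U i b) a.
  move=> [M [[hMc _] _ hind]] /=.
  apply: hind.
  - by move=> i; apply: hK; apply: gen_closed.
  - move=> i j lij a; apply: gen_mono => b [Mb [k [hk Ak]]]; split => //.
    exists k; split => //; left; case: hk => [lki|->] //; exact: ltT lij.
  - move=> a; split.
      move=> Ma; have [j Aj] := cov a; exists j; apply: gen_base; split => //.
      by exists j; split => //; right.
    by move=> [i]; apply: gen_sub => // b [].
exists (fun M => let (i, _) := cid (hM M) in e i (fun u : {u | U i u} => sval M (sval u))).
move=> M1 M2; case: (cid (hM M1)) => i1 s1; case: (cid (hM M2)) => i2 s2 ee.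
have ei := eij _ _ _ _ ee; subst i2.
have /(proj1 (he i1)) er := ee.
have eMU : (fun b => sval M1 b /\ U i1 b) = (fun b => sval M2 b /\ U i1 b).
  apply: functional_extensionality => b; apply: propositional_extensionality.
  split => -[Mb Ub].
    by split => //; have := f_equal (fun c => c (exist _ b Ub)) er => /= <-.
  by split => //; have := f_equal (fun c => c (exist _ b Ub)) er => /= ->.
apply: sig_eq; apply: functional_extensionality => a.
apply: propositional_extensionality.
by rewrite s1 s2 eMU.
Qed.

Lemma gen_sub_to (tau : vocab) (N : str tau) (S : N -> Prop) (hS : Defs.closed S)
  (l : list (sub hS)) (a : sub hS) :
  gen (fun x => List.In x l) a -> gen (fun x => List.In x (List.map sval l)) (sval a).
Proof.
apply: (@gen_sub _ _ _ (fun a : sub hS => gen (fun x => List.In x (List.map sval l)) (sval a))).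
  move=> f xs H; exact: (gen_closed H).
by move=> x lx; apply: gen_base; apply: List.in_map.
Qed.

Lemma gen_sub_from (tau : vocab) (N : str tau) (S : N -> Prop) (hS : Defs.closed S)
  (l : list (sub hS)) (b : N) :
  gen (fun x => List.In x (List.map sval l)) b ->
  S b /\ forall p : S b, gen (fun x => List.In x l) (exist _ b p : sub hS).
Proof.
apply: (@gen_sub _ _ _ (fun b => S b /\ forall p : S b, gen (fun x => List.In x l) (exist _ b p : sub hS))).
  move=> f xs H; split; first by apply: (hS) => i; exact: (proj1 (H i)).
  move=> p.
  pose ys := fun i => (exist _ (xs i) (proj1 (H i)) : sub hS).
  have -> : (exist _ (fint N f xs) p : sub hS) = fint (sub hS) f ys by apply: sig_eq.
  by apply: gen_closed => i; apply: (proj2 (H i)).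
move=> x /List.in_map_iff [a [<- la]]; split; first exact: (svalP a).
move=> p; have -> : (exist _ (sval a) p : sub hS) = a by apply: sig_eq.
exact: gen_base.
Qed.

Arguments gen_sub_to {tau N S hS l a}.
Arguments gen_sub_from {tau N S hS l b}.

Lemma fg_iso (tau : vocab) (N : str tau) (S : N -> Prop) (hS : Defs.closed S)
  (l : list (sub hS)) : isomorphic (fgsub (List.map sval l)) (fgsub l).
Proof.
pose h (y : fgsub (List.map sval l)) : fgsub l :=
  exist _ (exist _ (sval y) (proj1 (gen_sub_from (svalP y))))
    (proj2 (gen_sub_from (svalP y)) _).
pose g (x : fgsub l) : fgsub (List.map sval l) :=
  exist _ (sval (sval x)) (gen_sub_to (svalP x)).
exists h, g; split; [|split; [|split]].
- by move=> y; apply: sig_eq.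
- by move=> x; apply: sig_eq; apply: sig_eq.
- by move=> f xs; apply: sig_eq; apply: sig_eq.
- by move=> r xs.
Qed.

Arguments fg_iso {tau N S hS} l.

Lemma univ_sub (tau : vocab) (K : str tau -> Prop) (N : str tau) :
  universal_class K -> K N -> forall S : N -> Prop, Defs.closed S -> inK K S.
Proof.
move=> [Kiso Kfg] KN S hS; exists hS.
apply/Kfg => l; apply: (Kiso _ _ (fg_iso l)).
by move/Kfg: KN; apply.
Qed.

Lemma lf_sub (N : str grp_voc) (S : N -> Prop) (hS : Defs.closed S) :
  locally_finite_group N -> locally_finite_group (sub hS).
Proof.
move=> [[gA gI gV] lf].
have eop : forall x y : sub hS, sval (gop x y) = gop (sval x) (sval y).
  move=> x y; rewrite /gop /=; congr (fint N gmul _).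
  by apply: functional_extensionality => i; rewrite /args2; case: ifP.
have ein : forall x : sub hS, sval (gin x) = gin (sval x) by [].
have eid : sval (gid (sub hS)) = gid N.
  rewrite /gid /=; congr (fint N gone _).
  by apply: functional_extensionality => -[m hm].
split; first split.
- by move=> x y z; apply: sig_eq; rewrite !eop gA.
- by move=> x; split; apply: sig_eq; rewrite eop eid; case: (gI (sval x)).
- by move=> x; split; apply: sig_eq; rewrite eop ein eid; case: (gV (sval x)).
move=> l; have [l'' hl''] := lf (List.map sval l).
exists (List.flat_map (fun b => match excluded_middle_informative (S b) with
   | left p => [:: (exist _ b p : sub hS)] | right _ => [::] end) l'').
move=> a /gen_sub_to /hl'' ina; apply/List.in_flat_map; exists (sval a); split => //.
case: excluded_middle_informative => [p|np]; last by case: np; exact: (svalP a).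
by left; apply: sig_eq.
Qed.

Theorem claim1p6 :
  (forall (tau : vocab) (K : str tau -> Prop) (N : str tau)
          (I : Type) (lt : I -> I -> Prop),
      infinite_card N -> strong_limit N -> singular N ->
      universal_class K -> lt_card (vfun tau + vrel tau)%type N ->
      K N -> is_cof_ordinal N lt ->
      le_card {M : N -> Prop | IDC K lt M} N)
  /\
  (forall (N : str grp_voc) (I : Type) (lt : I -> I -> Prop),
      infinite_card N -> strong_limit N -> singular N ->
      locally_finite_group N -> is_cof_ordinal N lt ->
      le_card {M : N -> Prop | IDC locally_finite_group lt M} N).
Proof.
split.
- move=> tau K N I lt inf SL _ UK _ KN cof.
  apply: main_gen => //; exact: univ_sub.
- move=> N I lt inf SL _ lfN cof.
  apply: main_gen => // S hS; exists hS; exact: lf_sub.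
Qed.
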